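(* Let $k\ge2$, $n=2^k-1$, and let $C$ be the binary simplex $(n,k)$ code. Then every erasure pattern with at most $\frac{n-1}{2}$ erasures allows for parallel easy repair.
   Context: The binary simplex $(n,k)$ code, $n=2^k-1$, has generator matrix $G\in\mathbb F_2^{k\times n}$ whose columns $g_1,\dots,g_n$ are all the distinct nonzero vectors of $\mathbb F_2^k$; its minimum distance is $2^{k-1}$. Nodes are the coordinates $c_1,\dots,c_n$ of codewords $c=uG$. An erasure pattern is a set $S^e\subseteq\{1,\dots,n\}$ of erased nodes; the other nodes are live. A node $c_i$ is related to distinct nodes $c_{j_1},\dots,c_{j_\gamma}$ (all different from $c_i$) if $g_i=g_{j_1}+\dots+g_{j_\gamma}$. An erased node allows for $r$-repair if it is related to $\gamma\le r$ nodes which are all live; easy repair means $2$-repair (so $\gamma\in\{1,2\}$). An erasure pattern allows for parallel easy repair if each of its erased nodes allows for easy repair with respect to the original set of live nodes. *)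

(* Defs.v *)
From mathcomp Require Import all_boot all_algebra.
Set Implicit Arguments. Unset Strict Implicit. Unset Printing Implicit Defensive.
Import GRing.Theory.
Local Open Scope ring_scope.

(* A binary linear code given by a generator matrix G : 'M['F_2]_(k, n);
   node i is the coordinate c_i, with generator column g_i = col i G. *)

(* Binary simplex generator matrix: the columns are pairwise distinct and
   nonzero (with n = 2^k - 1 columns, they are then all nonzero vectors). *)
Definition simplex_generator (k n : nat) (G : 'M['F_2]_(k, n)) : Prop :=
  n = (2 ^ k - 1)%N /\
  (forall j : 'I_n, col j G != 0) /\
  injective (fun j : 'I_n => col j G).

Definition related (k n : nat) (G : 'M['F_2]_(k, n)) (i : 'I_n) (J : {set 'I_n}) :
  Prop := i \notin J /\ col i G = \sum_(j in J) col j G.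

Definition allows_repair (k n : nat) (G : 'M['F_2]_(k, n)) (S : {set 'I_n})
  (r : nat) (i : 'I_n) : Prop :=
  exists J : {set 'I_n},
    [/\ (1 <= #|J| <= r)%N, [disjoint J & S] & related G i J].

Definition allows_easy_repair (k n : nat) (G : 'M['F_2]_(k, n)) (S : {set 'I_n})
  (i : 'I_n) : Prop := allows_repair G S 2 i.

(* parallel easy repair: every erased node allows easy repair w.r.t. the
   original set of live nodes (the complement of S) *)
Definition parallel_easy_repair (k n : nat) (G : 'M['F_2]_(k, n))
  (S : {set 'I_n}) : Prop :=
  forall i : 'I_n, i \in S -> allows_easy_repair G S i.

(* Main.v *)
Require Import Defs.
From mathcomp Require Import all_boot all_algebra.
From mathcomp Require Import zify.
Import GRing.Theory.

Theorem theorem3p1 (k n : nat) (G : 'M['F_2]_(k, n)) :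
  (2 <= k)%N -> simplex_generator G ->
  forall S : {set 'I_n}, (#|S| <= (n - 1) %/ 2)%N -> parallel_easy_repair G S.
Proof.
Local Open Scope ring_scope.
move=> k2 [hn [nz inj]] S hS i iS.
have surj : forall v : 'cV['F_2]_k, v != 0%R -> exists j, col j G = v.
  move=> v v0.
  have CN : [set col j G | j : 'I_n] = [set~ (0%R : 'cV['F_2]_k)].
    apply/eqP; rewrite eqEcard; apply/andP; split.
      apply/subsetP => x /imsetP [j _ ->]; by rewrite !inE nz.
    rewrite cardsC1 card_mx card_Fp // card_imset // card_ord muln1 hn.
    by rewrite subn1.
  have : v \in [set~ (0%R : 'cV['F_2]_k)] by rewrite !inE.
  by rewrite -CN => /imsetP [j _ ->]; exists j.
pose partner (j : 'I_n) := odflt i [pick j' | col j' G == col i G - col j G].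
have pP : forall j, j != i -> col (partner j) G = col i G - col j G.
  move=> j ji; rewrite /partner; case: pickP => [j' /eqP //|].
  have : col i G - col j G != 0%R.
    by rewrite subr_eq0; apply: contra ji => /eqP /inj ->.
  by move=> /surj [j' hj'] /(_ j'); rewrite hj' eqxx.
have pi : forall j, j != i -> partner j != i.
  move=> j ji; apply/eqP => e; have := pP j ji; rewrite e => /eqP.
  by rewrite eq_sym subr_eq addrC -subr_eq subrr eq_sym (negbTE (nz j)).
have pj : forall j, j != i -> partner j != j.
  move=> j ji; apply/eqP => e; have := pP j ji; rewrite e => /eqP.
  rewrite eq_sym subr_eq -mulr2n -scaler_nat pchar_Fp_0 // scale0r.
  by rewrite (negbTE (nz i)).
have pp : forall j, j != i -> partner (partner j) = j.
  move=> j ji; apply: inj => /=; rewrite pP ?pi // pP //.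
  by rewrite opprB addrC subrK.
have n3 : (3 <= n)%N.
  rewrite hn; have : (2 ^ 2 <= 2 ^ k)%N by rewrite leq_exp2l.
  by rewrite expnS expn1; lia.
case: (boolP [exists j, [&& j != i, j \notin S & partner j \notin S]]).
  move=> /existsP [j /and3P [ji jS pS]].
  exists [set j; partner j]; split.
  - by rewrite cards2 eq_sym pj.
  - rewrite disjoint_subset; apply/subsetP => x; rewrite !inE.
    by case/orP => /eqP ->.
  - split; first by rewrite !inE negb_or; apply/andP; split; rewrite eq_sym //; exact: pi.
    by rewrite big_setU1 /= ?inE 1?eq_sym ?pj // big_set1 pP // addrC subrK.
move=> /existsPn H; exfalso.
pose A := S :\ i.
have sub : [set~ i] \subset A :|: [set partner x | x in A].
  apply/subsetP => j; rewrite !inE => ji; move: (H j); rewrite ji /=.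
  idtac.
  case: (boolP (j \in S)) => jS /= hp.
    by rewrite ?jS.
  apply/imsetP; exists (partner j); last by rewrite pp.
  by rewrite !inE pi //; move: hp; rewrite negbK.
have := subset_leq_card sub.
rewrite cardsC1 card_ord => h1.
have h2 := leq_trans h1 (leq_card_setU _ _).
have h3 := leq_imset_card partner A.
have h4 : #|A| = #|S|.-1 by rewrite (cardsD1 i S) iS.
have h5 : (0 < #|S|)%N by apply/card_gt0P; exists i.
have key : (n.-1 <= 2 * #|S|.-1)%N.
  by rewrite -h4; apply: leq_trans h2 _; rewrite mul2n -addnn leq_add2l.
move: key h5 hS n3; clear; generalize #|S| => s; lia.
Qed.
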